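(* Let $M$ be a structure whose theory is NTP$_2$, let $G$ be an $\emptyset$-definable group in $M$, and let $\psi(x,\bar y)$ be a formula implying $x\in G$. Then there is $k=k_\psi\in\mathbb N$ such that the following holds. Suppose $H\le G$ is a subgroup, $(T_i)_{i\in J}$ are groups, $\pi:H\to\prod_{i\in J}T_i$ is an epimorphism onto the Cartesian product, and $\pi_j:H\to T_j$ is the composition of $\pi$ with the projection to $T_j$. Suppose that for each $j\in J$ there are a subgroup $\bar R_j\le G$ and a proper subgroup $R_j<T_j$ with $\bar R_j\cap H=\pi_j^{-1}(R_j)$, such that all finite intersections of the groups $\bar R_j$ are uniformly definable by instances $\psi(x,\bar a)$ of $\psi$. Then $|J|\le k$. Moreover, if the theory of $M$ is NIP, then the same conclusion (a finite bound on $|J|$ depending only on the defining formula) holds under the weaker assumption that the groups $\bar R_j$ ($j\in J$) themselves are uniformly definable by instances of a single formula.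
   Context: A formula $\phi(\bar x,\bar y)$ has TP$_2$ if there are $k\in\mathbb N$, a model and parameters $\bar a_{ij}$ ($i,j\in\mathbb N$) such that for each $i$ the formulas $\phi(\bar x,\bar a_{ij})$ ($j\in\mathbb N$) are $k$-inconsistent, and for every $f:\mathbb N\to\mathbb N$ the set $\{\phi(\bar x,\bar a_{i,f(i)}):i\in\mathbb N\}$ is consistent; a theory is NTP$_2$ if no formula has TP$_2$. A theory is NIP if no formula has the independence property. *)

(* Defs.v *)
From mathcomp Require Import all_boot.
Set Implicit Arguments. Unset Strict Implicit. Unset Printing Implicit Defensive.

Record signature := Signature {
  func : Type; farity : func -> nat;
  rel : Type; rarity : rel -> nat }.

Record structure (L : signature) := Structure {
  carrier :> Type;
  witness : carrier;
  interp_f : forall f : func L, ('I_(farity f) -> carrier) -> carrier;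
  interp_r : forall r : rel L, ('I_(rarity r) -> carrier) -> Prop }.

Inductive term (L : signature) : Type :=
| Var : nat -> term L
| App : forall f : func L, ('I_(farity f) -> term L) -> term L.

(* variables are natural numbers; (Ex i p) binds variable i *)
Inductive formula (L : signature) : Type :=
| FEq : term L -> term L -> formula L
| FRel : forall r : rel L, ('I_(rarity r) -> term L) -> formula L
| FBot : formula L
| FNot : formula L -> formula L
| FAnd : formula L -> formula L -> formula L
| FOr : formula L -> formula L -> formula L
| FImp : formula L -> formula L -> formula L
| FEx : nat -> formula L -> formula L
| FAll : nat -> formula L -> formula L.

Section Semantics.
Variables (L : signature) (M : structure L).

Fixpoint eval (v : nat -> M) (t : term L) : M :=
  match t with
  | Var i => v i
  | App f ts => @interp_f L M f (fun i => eval v (ts i))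
  end.

Definition upd (v : nat -> M) (i : nat) (a : M) : nat -> M :=
  fun j => if j == i then a else v j.

Fixpoint sat (v : nat -> M) (p : formula L) : Prop :=
  match p with
  | FEq t1 t2 => eval v t1 = eval v t2
  | FRel r ts => @interp_r L M r (fun i => eval v (ts i))
  | FBot => False
  | FNot p => ~ sat v p
  | FAnd p q => sat v p /\ sat v q
  | FOr p q => sat v p \/ sat v q
  | FImp p q => sat v p -> sat v q
  | FEx i p => exists a, sat (upd v i a) p
  | FAll i p => forall a, sat (upd v i a) p
  end.
End Semantics.

Fixpoint term_vars_in L (P : nat -> Prop) (t : term L) : Prop :=
  match t with
  | Var i => P i
  | App f ts => forall i, term_vars_in P (ts i)
  end.

Fixpoint fvars_in L (P : nat -> Prop) (p : formula L) : Prop :=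
  match p with
  | FEq t1 t2 => term_vars_in P t1 /\ term_vars_in P t2
  | FRel r ts => forall i, term_vars_in P (ts i)
  | FBot => True
  | FNot p => fvars_in P p
  | FAnd p q | FOr p q | FImp p q => fvars_in P p /\ fvars_in P q
  | FEx i p | FAll i p => fvars_in (fun j => j = i \/ P j) p
  end.

Definition tenv (M : Type) (d : M) (n : nat) (x : 'I_n -> M) : nat -> M :=
  fun j => odflt d (omap x (insub j)).

Definition envcat (M : Type) (n : nat) (v w : nat -> M) : nat -> M :=
  fun j => if j < n then v j else w (j - n).

(* M |= p(x, y), where x gives variables 0..n-1 and y variables n..n+m-1 *)
Definition holds L (M : structure L) (n m : nat) (p : formula L)
  (x : 'I_n -> M) (y : 'I_m -> M) : Prop :=
  @sat L M (envcat n (tenv (witness M) x) (tenv (witness M) y)) p.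

Definition holds3 L (M : structure L) (n : nat) (p : formula L)
  (x y z : 'I_n -> M) : Prop :=
  @sat L M (envcat n (tenv (witness M) x)
          (envcat n (tenv (witness M) y) (tenv (witness M) z))) p.

(* N is a model of Th(M): every formula valid in M (i.e. whose universal
   closure is true in M) is valid in N *)
Definition models_th L (M N : structure L) : Prop :=
  forall p : formula L, (forall v, @sat L M v p) -> forall v, @sat L N v p.

Definition TP2 L (M : structure L) (phi : formula L) (p q : nat) : Prop :=
  fvars_in (fun j => j < p + q) phi /\
  exists (k : nat) (N : structure L), models_th M N /\
  exists a : nat -> nat -> 'I_q -> N,
    (forall (i : nat) (s : seq nat), uniq s -> size s = k ->
       ~ exists x : 'I_p -> N, forall j, j \in s -> holds phi x (a i j)) /\
    (* every path is consistent, i.e. finitely satisfiable in N *)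
    (forall (f : nat -> nat) (n0 : nat),
       exists x : 'I_p -> N, forall i, i < n0 -> holds phi x (a i (f i))).

Definition NTP2 L (M : structure L) : Prop :=
  forall (phi : formula L) (p q : nat), ~ TP2 M phi p q.

Definition IP L (M : structure L) (phi : formula L) (p q : nat) : Prop :=
  fvars_in (fun j => j < p + q) phi /\
  exists N : structure L, models_th M N /\
  exists (a : nat -> 'I_p -> N) (b : (nat -> Prop) -> 'I_q -> N),
    forall (i : nat) (S : nat -> Prop), holds phi (a i) (b S) <-> S i.

Definition NIP L (M : structure L) : Prop :=
  forall (phi : formula L) (p q : nat), ~ IP M phi p q.

Record dgroup (M : Type) (n : nat) := DGroup {
  gdom : ('I_n -> M) -> Prop;
  gmul : ('I_n -> M) -> ('I_n -> M) -> ('I_n -> M);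
  gone : 'I_n -> M;
  ginv : ('I_n -> M) -> ('I_n -> M);
  gmul_closed : forall a b, gdom a -> gdom b -> gdom (gmul a b);
  gone_in : gdom gone;
  ginv_closed : forall a, gdom a -> gdom (ginv a);
  gmulA : forall a b c, gdom a -> gdom b -> gdom c ->
            gmul a (gmul b c) = gmul (gmul a b) c;
  gmul1 : forall a, gdom a -> gmul gone a = a /\ gmul a gone = a;
  gmulV : forall a, gdom a -> gmul (ginv a) a = gone /\ gmul a (ginv a) = gone }.

Definition zero_definable L (M : structure L) (n : nat) (G : dgroup M n) : Prop :=
  exists (delta mu : formula L),
    fvars_in (fun j => j < n + 0) delta /\
    fvars_in (fun j => j < n + (n + n)) mu /\
    (forall x : 'I_n -> M, gdom G x <-> holds delta x (fun i : 'I_0 => witness M)) /\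
    (forall a b c : 'I_n -> M, gdom G a -> gdom G b -> gdom G c ->
       (gmul G a b = c <-> holds3 mu a b c)).

Definition dsubgroup (M : Type) (n : nat) (G : dgroup M n)
  (P : ('I_n -> M) -> Prop) : Prop :=
  (forall x, P x -> gdom G x) /\ P (gone G) /\
  (forall a b, P a -> P b -> P (gmul G a b)) /\ (forall a, P a -> P (ginv G a)).

Record Grp := Grp_ {
  gcar :> Type;
  gop : gcar -> gcar -> gcar;
  gid : gcar;
  gi : gcar -> gcar;
  gopA : forall a b c, gop a (gop b c) = gop (gop a b) c;
  gop1 : forall a, gop gid a = a;
  gopV : forall a, gop (gi a) a = gid }.

Definition proper_subgroup (T : Grp) (R : T -> Prop) : Prop :=
  R (gid T) /\ (forall a b, R a -> R b -> R (gop a b)) /\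
  (forall a, R a -> R (gi a)) /\ exists t, ~ R t.

Definition lemma_setting (M : Type) (n : nat) (G : dgroup M n)
  (H : ('I_n -> M) -> Prop) (J : Type) (T : J -> Grp)
  (pi : ('I_n -> M) -> forall j, T j)
  (Rbar : J -> ('I_n -> M) -> Prop) (R : forall j, T j -> Prop) : Prop :=
  dsubgroup G H /\
  (forall a b, H a -> H b -> pi (gmul G a b) = (fun j => gop (pi a j) (pi b j))) /\
  (forall t : forall j, T j, exists h, H h /\ pi h = t) /\
  (forall j, dsubgroup G (Rbar j)) /\
  (forall j, proper_subgroup (R j)) /\
  (forall j h, H h -> (Rbar j h <-> R j (pi h j))).

Definition card_le (J : Type) (k : nat) : Prop :=
  exists f : J -> 'I_k, injective f.

(* Main.v *)
Require Import Defs.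
From mathcomp Require Import all_boot.
From mathcomp Require Import zify.
From mathcomp Require boolp classical_sets filter.
From Stdlib Require Import ClassicalEpsilon FunctionalExtensionality PropExtensionality Classical.
Set Implicit Arguments. Unset Strict Implicit. Unset Printing Implicit Defensive.

Section UFsec.
Import boolp classical_sets filter.
Local Open Scope classical_set_scope.

Lemma nonprincipal_uf : exists U : (nat -> Prop) -> Prop,
  U (fun _ => True) /\
  (forall A B, U A -> U B -> U (fun n => A n /\ B n)) /\
  (forall A B : nat -> Prop, (forall n, A n -> B n) -> U A -> U B) /\
  ~ U (fun _ => False) /\
  (forall A, U A \/ U (fun n => ~ A n)) /\
  (forall N, U (fun n => (N <= n)%N)).
Proof.
have [G [GU sub]] := ultraFilterLemma (@eventually_filter).
have GP : ProperFilter G by apply: ultra_proper.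
exists G; split; first exact: (@filterT _ _ GP).
split; first by move=> A B a b; exact: (@filterI _ _ GP _ _ a b).
split; first by move=> A B AB; apply: (@filterS _ _ GP) => x /AB.
split; first by move=> H; have := (@filter_not_empty _ _ GP); apply; rewrite -[set0]/(fun _ => False).
split; first by move=> A; have := in_ultra_setVsetC A GU.
by move=> N; apply: sub; exists N.
Qed.

End UFsec.


Section Syn.
Variable L : signature.

Fixpoint trename (r : nat -> nat) (t : term L) : term L :=
  match t with
  | Var i => Var L (r i)
  | App f ts => App (fun i => trename r (ts i))
  end.

Fixpoint frename (r : nat -> nat) (p : formula L) : formula L :=
  match p with
  | FEq t1 t2 => FEq (trename r t1) (trename r t2)
  | FRel s ts => FRel (fun i => trename r (ts i))
  | FBot => FBot L
  | FNot p => FNot (frename r p)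
  | FAnd p q => FAnd (frename r p) (frename r q)
  | FOr p q => FOr (frename r p) (frename r q)
  | FImp p q => FImp (frename r p) (frename r q)
  | FEx i p => FEx (r i) (frename r p)
  | FAll i p => FAll (r i) (frename r p)
  end.

Fixpoint exn (k b : nat) (p : formula L) : formula L :=
  if k is k'.+1 then FEx b (exn k' b.+1 p) else p.

Variable M : structure L.

Lemma eval_rename r (v : nat -> M) : forall t, eval v (trename r t) = eval (fun j => v (r j)) t.
Proof.
fix IH 1; move=> [i|g ts] //=; congr interp_f; apply: functional_extensionality => i.
exact: IH.
Qed.

Lemma sat_rename r (rinj : injective r) p : forall (v : nat -> M),
  sat v (frename r p) <-> sat (fun j => v (r j)) p.
Proof.
have E : forall (v : nat -> M) i a, (fun j => upd v (r i) a (r j)) = upd (fun j => v (r j)) i a.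
  move=> v i a; apply: functional_extensionality => j; rewrite /upd (inj_eq rinj) //.
elim: p => [t1 t2|s ts||p IH|p IHp q IHq|p IHp q IHq|p IHp q IHq|i p IH|i p IH] v /=.
- by rewrite !eval_rename.
- have -> // : (fun i => eval v (trename r (ts i))) = (fun i => eval (fun j => v (r j)) (ts i)).
  by apply: functional_extensionality => i; rewrite eval_rename.
- by [].
- by rewrite IH.
- by rewrite IHp IHq.
- by rewrite IHp IHq.
- by rewrite IHp IHq.
- by split=> [[a]|[a]]; exists a; move: p0; rewrite IH E.
- by split=> h a; move: (h a); rewrite IH E.
Qed.

Lemma eval_ext (P : nat -> Prop) : forall t (v w : nat -> M), term_vars_in P t ->
  (forall j, P j -> v j = w j) -> eval v t = eval w t.
Proof.
fix IH 1; move=> [i|g ts] v w /= h e; first exact: e.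
congr interp_f; apply: functional_extensionality => i; exact: IH (h i) e.
Qed.

Lemma sat_ext p : forall (P : nat -> Prop) (v w : nat -> M), fvars_in P p ->
  (forall j, P j -> v j = w j) -> (sat v p <-> sat w p).
Proof.
have E : forall (P : nat -> Prop) (v w : nat -> M) i a, (forall j, P j -> v j = w j) ->
   forall j, (j = i \/ P j) -> upd v i a j = upd w i a j.
  move=> P v w i a e j [->|pj]; rewrite /upd; first by rewrite eqxx.
  by case: (j == i) => //; apply: e.
elim: p => [t1 t2|s ts||p IH|p IHp q IHq|p IHp q IHq|p IHp q IHq|i p IH|i p IH] P v w /= h e.
- by rewrite (eval_ext h.1 e) (eval_ext h.2 e).
- have -> // : (fun i => eval v (ts i)) = (fun i => eval w (ts i)).
  by apply: functional_extensionality => i; apply: eval_ext (h i) e.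
- by [].
- by rewrite (IH _ _ _ h e).
- by rewrite (IHp _ _ _ h.1 e) (IHq _ _ _ h.2 e).
- by rewrite (IHp _ _ _ h.1 e) (IHq _ _ _ h.2 e).
- by rewrite (IHp _ _ _ h.1 e) (IHq _ _ _ h.2 e).
- by split=> [[a ha]|[a ha]]; exists a; move: ha; rewrite (IH _ _ _ h (E _ _ _ i a e)).
- by split=> ha a; move: (ha a); rewrite (IH _ _ _ h (E _ _ _ i a e)).
Qed.

Lemma sat_exn k : forall b p (v : nat -> M),
  sat v (exn k b p) <-> exists w : nat -> M, sat (fun j => if (b <= j) && (j < b + k) then w j else v j) p.
Proof.
elim: k => [|k IH] b p v /=.
  have E0 : forall w : nat -> M, (fun j => if (b <= j) && (j < b + 0) then w j else v j) = v.
    by move=> w; apply: functional_extensionality => j; rewrite addn0; case: ifP => //; lia.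
  by split; [move=> h; exists v; rewrite E0 | move=> [w]; rewrite E0].
split.
  move=> [a]; rewrite IH => [[w h]]; exists (fun j => if j == b then a else w j).
  suff <- : (fun j => if (b.+1 <= j) && (j < b.+1 + k) then w j else upd v b a j) =
    (fun j => if (b <= j) && (j < b + k.+1) then (if j == b then a else w j) else v j) by [].
  apply: functional_extensionality => j; rewrite /upd.
  case: (eqVneq j b) => [->|ne].
    by rewrite ifF ?ifT //; lia.
  have -> : (b.+1 <= j) && (j < b.+1 + k) = (b <= j) && (j < b + k.+1) by move: ne => /eqP; lia.
  by [].
move=> [w h]; exists (w b); rewrite IH; exists w.
suff -> : (fun j => if (b.+1 <= j) && (j < b.+1 + k) then w j else upd v b (w b) j) =
    (fun j => if (b <= j) && (j < b + k.+1) then w j else v j) by [].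
apply: functional_extensionality => j; rewrite /upd.
case: (eqVneq j b) => [->|ne].
  by rewrite ifF ?ifT //; lia.
have -> : (b.+1 <= j) && (j < b.+1 + k) = (b <= j) && (j < b + k.+1) by move: ne => /eqP; lia.
by [].
Qed.

Lemma tvars_mono (P Q : nat -> Prop) : (forall j, P j -> Q j) -> forall t : term L,
  term_vars_in P t -> term_vars_in Q t.
Proof. move=> PQ; fix IH 1; move=> [i|g ts] /=; [exact: PQ | move=> h i; exact: IH]. Qed.

Lemma tvars_rename (P Q : nat -> Prop) r : (forall j, P j -> Q (r j)) -> forall t : term L,
  term_vars_in P t -> term_vars_in Q (trename r t).
Proof. move=> PQ; fix IH 1; move=> [i|g ts] /=; [exact: PQ | move=> h i; exact: IH]. Qed.

Lemma fvars_mono (p : formula L) : forall (P Q : nat -> Prop), (forall j, P j -> Q j) ->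
  fvars_in P p -> fvars_in Q p.
Proof.
elim: p => [t1 t2|s ts||p IH|p IHp q IHq|p IHp q IHq|p IHp q IHq|i p IH|i p IH] P Q PQ /=.
- by move=> [a b]; split; [exact: (tvars_mono PQ a)|exact: (tvars_mono PQ b)].
- by move=> h i; exact: (tvars_mono PQ (h i)).
- by [].
- exact: IH.
- by move=> [a b]; split; [apply: IHp PQ a|apply: IHq PQ b].
- by move=> [a b]; split; [apply: IHp PQ a|apply: IHq PQ b].
- by move=> [a b]; split; [apply: IHp PQ a|apply: IHq PQ b].
- by apply: IH => j [->|pj]; [left|right; apply: PQ].
- by apply: IH => j [->|pj]; [left|right; apply: PQ].
Qed.

Lemma fvars_rename r (p : formula L) : forall (P Q : nat -> Prop), (forall j, P j -> Q (r j)) ->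
  fvars_in P p -> fvars_in Q (frename r p).
Proof.
elim: p => [t1 t2|s ts||p IH|p IHp q IHq|p IHp q IHq|p IHp q IHq|i p IH|i p IH] P Q PQ /=.
- by move=> [a b]; split; [exact: (tvars_rename PQ a)|exact: (tvars_rename PQ b)].
- by move=> h i; exact: (tvars_rename PQ (h i)).
- by [].
- exact: IH.
- by move=> [a b]; split; [apply: IHp PQ a|apply: IHq PQ b].
- by move=> [a b]; split; [apply: IHp PQ a|apply: IHq PQ b].
- by move=> [a b]; split; [apply: IHp PQ a|apply: IHq PQ b].
- by apply: IH => j [->|pj]; [left|right; apply: PQ].
- by apply: IH => j [->|pj]; [left|right; apply: PQ].
Qed.

Lemma fvars_exn k : forall b (p : formula L) (Q : nat -> Prop),
  fvars_in (fun j => ((b <= j) && (j < b + k)) \/ Q j) p -> fvars_in Q (exn k b p).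
Proof.
elim: k => [|k IH] b p Q /=.
  by apply: fvars_mono => j [|//]; lia.
move=> h; apply: IH; apply: fvars_mono h => j [h|h]; last by right; right.
case: (eqVneq j b) => [->|ne]; [by right; left| left; move: ne => /eqP; lia].
Qed.
End Syn.


Lemma tenv_lt (T : Type) (d : T) k (x : 'I_k -> T) j (h : j < k) : tenv d x j = x (Ordinal h).
Proof. by rewrite /tenv insubT. Qed.
Lemma tenv_ge (T : Type) (d : T) k (x : 'I_k -> T) j : k <= j -> tenv d x j = d.
Proof. by move=> h; rewrite /tenv insubF // ltnNge h. Qed.

Lemma iff_and2 (A B C D : Prop) : (A <-> C) -> (B <-> D) -> (A /\ B <-> C /\ D).
Proof. tauto. Qed.

Section Phi.
Variables (L : signature) (M : structure L) (n m : nat) (delta mu psi : formula L).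
Hypothesis fd : fvars_in (fun j => j < n + 0) delta.
Hypothesis fm : fvars_in (fun j => j < n + (n + n)) mu.
Hypothesis fp : fvars_in (fun j => j < n + m) psi.

Definition N0 := n + m + n.
Definition rpsi j := if j < n then j + N0 else if j < n + m then j else j + N0 + n.
Definition rmu j := if j < n then j + (n + m) else if j < n + n then j - n + N0
  else if j < n + n + n then j - (n + n) else j + N0 + n.

Lemma rpsi_inj : injective rpsi.
Proof. by move=> a b; rewrite /rpsi /N0; repeat (case: ifP => ?); lia. Qed.
Lemma rmu_inj : injective rmu.
Proof. by move=> a b; rewrite /rmu /N0; repeat (case: ifP => ?); lia. Qed.

Definition phi := FAnd delta (exn n N0 (FAnd (frename rpsi psi) (frename rmu mu))).

Lemma phi_fvars : fvars_in (fun j => j < n + (m + n)) phi.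
Proof.
split; first by apply: fvars_mono fd => j; lia.
apply: fvars_exn; split.
  apply: fvars_rename fp => j h; rewrite /rpsi /N0; repeat (case: ifP => ?); lia.
apply: fvars_rename fm => j h; rewrite /rmu /N0; repeat (case: ifP => ?); lia.
Qed.

Definition ypart (c : 'I_(m + n) -> M) : 'I_m -> M := fun k => c (lshift n k).
Definition zpart (c : 'I_(m + n) -> M) : 'I_n -> M := fun k => c (rshift m k).

Lemma phi_sem (x : 'I_n -> M) (c : 'I_(m + n) -> M) :
  holds phi x c <-> holds delta x (fun _ : 'I_0 => witness M) /\
    exists w : 'I_n -> M, holds psi w (ypart c) /\ holds3 mu (zpart c) w x.
Proof.
rewrite /holds /holds3 /phi /=.
set E := envcat n _ _.
have -> : sat E delta <-> sat (envcat n (tenv (witness M) x) (tenv (witness M) (fun _ : 'I_0 => witness M))) delta.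
  apply: (sat_ext fd) => j h; rewrite /E /envcat; have hj : j < n by lia.
  by rewrite hj.
apply: iff_and2; first done.
rewrite sat_exn.
pose E' (W : nat -> M) j := if (N0 <= j) && (j < N0 + n) then W j else E j.
have key : forall W, sat (E' W) (FAnd (frename rpsi psi) (frename rmu mu)) <->
   holds psi (fun k : 'I_n => W (k + N0)) (ypart c) /\ holds3 mu (zpart c) (fun k : 'I_n => W (k + N0)) x.
  move=> W /=; rewrite !sat_rename; try (exact: rpsi_inj || exact: rmu_inj).
  apply: iff_and2.
    apply: (sat_ext fp) => j h; rewrite /E' /E /envcat.
    case: (ltnP j n) => hj.
      have -> : rpsi j = j + N0 by rewrite /rpsi hj.
      rewrite (_ : (N0 <= j + N0) && (j + N0 < N0 + n) = true); last lia.
      by rewrite (tenv_lt _ _ hj).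
    have -> : rpsi j = j.
      rewrite /rpsi (_ : j < n = false); last lia.
      by rewrite h.
    rewrite (_ : (N0 <= j) && (j < N0 + n) = false); last (rewrite /N0; lia).
    rewrite (_ : j < n = false); last lia.
    have h1 : j - n < m + n by lia.
    have h2 : j - n < m by lia.
    rewrite (tenv_lt _ _ h1) (tenv_lt _ _ h2) /ypart; congr c; apply: val_inj => //.
  apply: (sat_ext fm) => j h; rewrite /E' /E /envcat.
  case: (ltnP j n) => hj.
    have -> : rmu j = j + (n + m) by rewrite /rmu hj.
    rewrite (_ : (N0 <= j + (n + m)) && (j + (n + m) < N0 + n) = false); last (rewrite /N0; lia).
    rewrite (_ : j + (n + m) < n = false); last lia.
    have h1 : j + (n + m) - n < m + n by lia.
    rewrite (tenv_lt _ _ h1) (tenv_lt _ _ hj) /zpart; congr c; apply: val_inj => /=; lia.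
  case: (ltnP j (n + n)) => hj2.
    have -> : rmu j = j - n + N0.
      rewrite /rmu hj2 (_ : j < n = false) //; lia.
    rewrite (_ : (N0 <= j - n + N0) && (j - n + N0 < N0 + n) = true); last lia.
    rewrite (_ : j - n < n = true); last lia.
    have h1 : j - n < n by lia.
    by rewrite (tenv_lt _ _ h1) /=.
  have -> : rmu j = j - (n + n).
    rewrite /rmu (_ : j < n = false); last lia.
    rewrite (_ : j < n + n = false); last lia.
    rewrite (_ : j < n + n + n = true) //; lia.
  rewrite (_ : (N0 <= j - (n + n)) && (j - (n + n) < N0 + n) = false); last (rewrite /N0; lia).
  rewrite (_ : j - (n + n) < n = true); last lia.
  rewrite (_ : j - n < n = false); last lia.
  have h1 : j - (n + n) < n by lia.
  have h2 : j - n - n < n by lia.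
  rewrite (tenv_lt _ _ h1) (tenv_lt _ _ h2); congr x; apply: val_inj => /=; lia.
split.
  move=> [W]; rewrite -/(E' W) key => h; by exists (fun k : 'I_n => W (k + N0)).
move=> [w h]; exists (fun j => tenv (witness M) w (j - N0)); rewrite -/(E' _) key.
have -> // : (fun k : 'I_n => tenv (witness M) w (k + N0 - N0)) = w.
apply: functional_extensionality => k; rewrite addnK.
by rewrite (tenv_lt _ _ (ltn_ord k)); congr w; apply: val_inj.
Qed.
End Phi.


Notation cid := (@constructive_indefinite_description _ _).

Lemma inj_dich (J : Type) K : (exists f : J -> 'I_K, injective f) \/ (exists g : 'I_K -> J, injective g).
Proof.
elim: K => [|K [[f fi]|[g gi]]].
- right; have g : 'I_0 -> J by case.
  by exists g; case.
- left; exists (fun x => widen_ord (leqnSn K) (f x)).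
  by move=> a b /(congr1 val) /= /val_inj /fi.
- case: (classic (forall jj, exists o, g o = jj)) => [s|ns].
    left; exists (fun jj => widen_ord (leqnSn K) (proj1_sig (cid (s jj)))).
    move=> a b /(congr1 val) /= /val_inj.
    case: (cid (s a)) => oa ea; case: (cid (s b)) => ob eb /= e.
    by rewrite -ea -eb e.
  have [jj0 h0] : exists jj, forall o, g o <> jj.
    apply: NNPP => h; apply: ns => jj; apply: NNPP => h2; apply: h; exists jj => o e.
    by apply: h2; exists o.
  right; exists (fun o : 'I_K.+1 => if unlift ord_max o is Some o' then g o' else jj0).
  move=> a b; case: unliftP => [oa ->|->]; case: unliftP => [ob ->|->] //.
  + by move/gi => ->.
  + by move=> e; case: (h0 oa).
  + by move=> e; case: (h0 ob).
Qed.

Lemma notcard_inj (J : Type) K (X : finType) : ~ card_le J K -> #|X| <= K ->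
  exists e : X -> J, injective e.
Proof.
move=> nc le; case: (inj_dich J K) => [[f fi]|[g gi]].
  by exfalso; apply: nc; exists f.
exists (fun x => g (widen_ord le (enum_rank x))).
by move=> a b /gi /(congr1 val) /= /val_inj /enum_rank_inj.
Qed.

Definition uinv (X J : Type) (e : X -> J) (jj : J) : option X :=
  match excluded_middle_informative (exists x, e x = jj) with
  | left h => Some (proj1_sig (cid h))
  | right _ => None
  end.

Lemma uinvE (X J : Type) (e : X -> J) : injective e -> forall x, uinv e (e x) = Some x.
Proof.
move=> ei x; rewrite /uinv; case: excluded_middle_informative => [h|h]; last first.
  by exfalso; apply: h; exists x.
by case: (cid h) => y /= /ei ->.
Qed.

Definition asb (P : Prop) : bool := if excluded_middle_informative P then true else false.
Lemma asbP (P : Prop) : asb P <-> P.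
Proof. by rewrite /asb; case: excluded_middle_informative. Qed.

Section GrpLemmas.
Variable T : Grp.
Lemma gidem (a : T) : gop a a = a -> a = gid T.
Proof. by move=> e; rewrite -[LHS]gop1 -(gopV a) -gopA e. Qed.
Lemma gopVr (a : T) : gop a (gi a) = gid T.
Proof. by apply: gidem; rewrite -gopA [gop (gi a) _]gopA gopV gop1. Qed.
Lemma gop1r (a : T) : gop a (gid T) = a.
Proof. by rewrite -(gopV a) gopA gopVr gop1. Qed.
End GrpLemmas.

Section DG.
Variables (M : Type) (n : nat) (G : dgroup M n).
Lemma dg_cancel z x : gdom G z -> gdom G x -> gmul G z (gmul G (ginv G z) x) = x.
Proof.
move=> hz hx; rewrite gmulA //; last exact: ginv_closed.
by rewrite (gmulV hz).2 (gmul1 hx).1.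
Qed.
Lemma dg_key z z' w w' : gdom G z -> gdom G z' -> gdom G w -> gdom G w' ->
  gmul G z w = gmul G z' w' -> gmul G (ginv G z') z = gmul G w' (ginv G w).
Proof.
move=> hz hz' hw hw' e.
have iz' := ginv_closed hz'; have iw := ginv_closed hw.
rewrite -[LHS](gmul1 (gmul_closed iz' hz)).2 -(gmulV hw).2.
rewrite gmulA //; try apply: gmul_closed => //.
rewrite -[gmul G (gmul G (ginv G z') z) w]gmulA // e gmulA //.
by rewrite (gmulV hz').1 (gmul1 hw').1.
Qed.
End DG.


Section Conf.
Variables (L : signature) (M : structure L) (n : nat) (G : dgroup M n) (m : nat) (psi : formula L).

Lemma pi_one (H : ('I_n -> M) -> Prop) (J : Type) (T : J -> Grp) (pi : ('I_n -> M) -> forall j, T j) :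
  dsubgroup G H -> (forall a b, H a -> H b -> pi (gmul G a b) = (fun j => gop (pi a j) (pi b j))) ->
  forall j, pi (gone G) j = gid (T j).
Proof.
move=> [sH [h1 _]] hom j; apply: gidem.
have := congr1 (fun f => f j) (hom _ _ h1 h1); rewrite /= (gmul1 (sH _ h1)).1 => <- //.
Qed.

Lemma pi_inv (H : ('I_n -> M) -> Prop) (J : Type) (T : J -> Grp) (pi : ('I_n -> M) -> forall j, T j) :
  dsubgroup G H -> (forall a b, H a -> H b -> pi (gmul G a b) = (fun j => gop (pi a j) (pi b j))) ->
  forall z, H z -> forall j, gop (pi (ginv G z) j) (pi z j) = gid (T j).
Proof.
move=> sg hom z hz j; move: (sg) => [sH [h1 [hm hi]]].
have := congr1 (fun f => f j) (hom _ _ (hi _ hz) hz); rewrite /= (gmulV (sH _ hz)).1 => <-.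
exact: (pi_one sg hom).
Qed.

Lemma conf_nip l H J T pi Rbar R :
  @lemma_setting M n G H J T pi Rbar R ->
  (forall j : J, exists b : 'I_m -> M, forall x, Rbar j x <-> holds psi x b) ->
  ~ card_le J (2 ^ l.+1) ->
  exists (h : nat -> 'I_n -> M) (c : (nat -> Prop) -> 'I_m -> M),
    forall i (S : nat -> Prop), i <= l -> (holds psi (h i) (c S) <-> S i).
Proof.
move=> [sH [hom [surj [sR [prR hiff]]]]] hb nc.
have [e ei] : exists e : {ffun 'I_l.+1 -> bool} -> J, injective e.
  by apply: notcard_inj nc _; rewrite card_ffun card_bool card_ord.
have tj : forall j, exists t, ~ R j t by move=> j; case: (prR j) => _ [_ [_ h]].
pose t j := proj1_sig (cid (tj j)).
have tP : forall j, ~ R j (t j) by move=> j; rewrite /t; case: (cid _).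
pose pre s := proj1_sig (cid (surj s)).
have preP : forall s, H (pre s) /\ pi (pre s) = s by move=> s; rewrite /pre; case: (cid _).
pose sig i : forall j, T j := fun jj => match uinv e jj with
  | Some S' => if S' (inord i) then gid (T jj) else t jj | None => gid (T jj) end.
pose c (S : nat -> Prop) := proj1_sig (cid (hb (e [ffun o : 'I_l.+1 => asb (S o)]))).
have cP : forall (S : nat -> Prop) x, Rbar (e [ffun o : 'I_l.+1 => asb (S o)]) x <-> holds psi x (c S).
  by move=> S x; rewrite /c; case: (cid _).
exists (fun i => pre (sig i)), c => i S il.
rewrite -cP; have [hH hpi] := preP (sig i).
rewrite (hiff _ _ hH) hpi /sig uinvE // ffunE.
have A := asbP (S (@inord l i)).
have E : S (@inord l i) = S i by rewrite inordK.
move: A; case: (asb (S (@inord l i))) => A; rewrite E in A.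
  split=> _; first by apply/A.
  by case: (prR (e [ffun o : 'I_l.+1 => asb (S o)])).
split=> h; first by case: (tP _ h).
by have := proj2 A h.
Qed.

Definition combine (y : 'I_m -> M) (z : 'I_n -> M) : 'I_(m + n) -> M :=
  fun k => match split k with inl a => y a | inr b => z b end.
Lemma ypart_comb y z : ypart (combine y z) = y.
Proof.
apply: functional_extensionality => k; rewrite /ypart /combine.
by rewrite (_ : lshift n k = unsplit (inl k)) // unsplitK.
Qed.
Lemma zpart_comb y z : zpart (combine y z) = z.
Proof.
apply: functional_extensionality => k; rewrite /zpart /combine.
by rewrite (_ : rshift m k = unsplit (inr k)) // unsplitK.
Qed.

Lemma inord_inj l j j' : j <= l -> j' <= l -> (@inord l j == @inord l j') = (j == j').
Proof.
move=> jl j'l; apply/eqP/eqP => [e|->] //.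
by rewrite -(@inordK l j) // -(@inordK l j') // e.
Qed.

Lemma conf_tp2 l (delta mu : formula L) H J T pi Rbar R
  (fd : fvars_in (fun j => j < n + 0) delta)
  (fm : fvars_in (fun j => j < n + (n + n)) mu)
  (fp : fvars_in (fun j => j < n + m) psi) :
  (forall x : 'I_n -> M, gdom G x <-> holds delta x (fun i : 'I_0 => witness M)) ->
  (forall a b c, gdom G a -> gdom G b -> gdom G c -> (gmul G a b = c <-> holds3 mu a b c)) ->
  (forall (x : 'I_n -> M) (y : 'I_m -> M), holds psi x y -> gdom G x) ->
  @lemma_setting M n G H J T pi Rbar R ->
  (forall (n0 : nat) (F : nat -> J), exists b : 'I_m -> M,
      forall x, (forall i, i <= n0 -> Rbar (F i) x) <-> holds psi x b) ->
  ~ card_le J (l.+1 * l.+1) ->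
  exists a : nat -> nat -> 'I_(m + n) -> M,
   (forall i j j' (x : 'I_n -> M), i <= l -> j <= l -> j' <= l -> j != j' ->
       holds (phi n m delta mu psi) x (a i j) -> holds (phi n m delta mu psi) x (a i j') -> False) /\
   (forall f : nat -> nat, (forall i, i <= l -> f i <= l) ->
       exists x : 'I_n -> M, forall i, i <= l -> holds (phi n m delta mu psi) x (a i (f i))).
Proof.
move=> dP mP psiG [sH [hom [surj [sR [prR hiff]]]]] hb nc.
have [e ei] : exists e : 'I_l.+1 * 'I_l.+1 -> J, injective e.
  by apply: notcard_inj nc _; rewrite card_prod !card_ord.
have tj : forall j, exists t, ~ R j t by move=> j; case: (prR j) => _ [_ [_ h]].
pose t j := proj1_sig (cid (tj j)).
have tP : forall j, ~ R j (t j) by move=> j; rewrite /t; case: (cid _).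
pose pre s := proj1_sig (cid (surj s)).
have preP : forall s, H (pre s) /\ pi (pre s) = s by move=> s; rewrite /pre; case: (cid _).
pose y i := proj1_sig (cid (hb l (fun k => e (@inord l i, @inord l k)))).
have yP : forall i x, (forall k, k <= l -> Rbar (e (@inord l i, @inord l k)) x) <-> holds psi x (y i).
  by move=> i x; rewrite /y; case: (cid _).
pose tau i j : forall jj, T jj := fun jj => match uinv e jj with
  | Some p => if (p.1 == @inord l i) && (p.2 == @inord l j) then t jj else gid (T jj)
  | None => gid (T jj) end.
pose z i j := pre (tau i j).
have sHG := sH.1.
have [_ [_ [Hmul Hinv]]] := sH.
exists (fun i j => combine (y i) (z i j)); split.
- move=> i j j' x il jl j'l ne h1 h2.
  move/(phi_sem fd fm fp): h1; rewrite ypart_comb zpart_comb => [[dx [w [hw mw]]]].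
  move/(phi_sem fd fm fp): h2; rewrite ypart_comb zpart_comb => [[_ [w' [hw' mw']]]].
  have gx : gdom G x by apply/dP.
  have gw := psiG _ _ hw; have gw' := psiG _ _ hw'.
  have [Hz pz] := preP (tau i j); have [Hz' pz'] := preP (tau i j').
  have gz := sHG _ Hz; have gz' := sHG _ Hz'.
  have e1 := (mP _ _ _ gz gw gx).2 mw; have e2 := (mP _ _ _ gz' gw' gx).2 mw'.
  have key := dg_key gz gz' gw gw' (etrans e1 (esym e2)).
  set cc := e (@inord l i, @inord l j).
  have Rw := (yP _ _).2 hw j jl; have Rw' := (yP _ _).2 hw' j jl.
  have [_ [_ [Rmul Rinv]]] := sR cc.
  have Rd : Rbar cc (gmul G (ginv G (z i j')) (z i j)).
    by rewrite key; apply: Rmul => //; apply: Rinv.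
  have Hd : H (gmul G (ginv G (z i j')) (z i j)) by apply: Hmul => //; apply: Hinv.
  move/(hiff _ _ Hd): Rd; rewrite (hom _ _ (Hinv _ Hz') Hz) /=.
  have pzc : pi (z i j) cc = t cc by rewrite /z pz /tau /cc uinvE //= !eqxx.
  have pz'c : pi (z i j') cc = gid (T cc).
    rewrite /z pz' /tau /cc uinvE //= eqxx /= inord_inj //.
    by rewrite (negbTE ne).
  have := pi_inv sH hom Hz' cc; rewrite pz'c gop1r => ->.
  by rewrite pzc gop1 => /tP.
- move=> f hf.
  pose sg : forall jj, T jj := fun jj => match uinv e jj with
    | Some p => if p.2 == @inord l (f p.1) then t jj else gid (T jj)
    | None => gid (T jj) end.
  have [Hx px] := preP sg.
  exists (pre sg) => i il.
  apply/(phi_sem fd fm fp); rewrite ypart_comb zpart_comb.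
  have gx := sHG _ Hx.
  split; first by apply/dP.
  have [Hz pz] := preP (tau i (f i)); have gz := sHG _ Hz.
  have Hw : H (gmul G (ginv G (z i (f i))) (pre sg)) by apply: Hmul => //; apply: Hinv.
  exists (gmul G (ginv G (z i (f i))) (pre sg)); split.
    apply/yP => k kl; set cc := e (@inord l i, @inord l k).
    apply/(hiff _ _ Hw); rewrite (hom _ _ (Hinv _ Hz) Hx) /=.
    have -> : pi (pre sg) cc = pi (z i (f i)) cc.
      by rewrite px pz /sg /tau /cc uinvE //= eqxx /= inordK.
    rewrite (pi_inv sH hom Hz cc).
    by case: (prR cc).
  apply/(mP _ _ _ gz (sHG _ Hw) gx).
  exact: dg_cancel.
Qed.
End Conf.


Section Ultra.
Variable U : (nat -> Prop) -> Prop.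
Hypothesis UT : U (fun _ => True).
Hypothesis UI : forall A B, U A -> U B -> U (fun n => A n /\ B n).
Hypothesis US : forall A B : nat -> Prop, (forall n, A n -> B n) -> U A -> U B.
Hypothesis U0 : ~ U (fun _ => False).
Hypothesis Uult : forall A, U A \/ U (fun n => ~ A n).

Lemma U_fin k (A : 'I_k -> nat -> Prop) :
  (forall i, U (A i)) -> U (fun n => forall i, A i n).
Proof.
move=> HA.
have H : forall s : seq 'I_k, U (fun n => forall i, i \in s -> A i n).
  elim=> [|a s IH]; first by apply: US UT => n _ i.
  apply: US (UI (HA a) IH) => n [h1 h2] i; rewrite in_cons => /orP [/eqP -> //|].
  exact: h2.
apply: US (H (enum 'I_k)) => n h i; apply: h; by rewrite mem_enum.
Qed.

Lemma U_iff (E A B : nat -> Prop) : U E -> (forall n, E n -> (A n <-> B n)) -> (U A <-> U B).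
Proof.
move=> UE h; split=> UA; apply: US (UI UE UA) => n [e a]; by apply/(h n e).
Qed.

Variables (L : signature) (M : structure L).

Definition ueq (f g : nat -> M) := U (fun n => f n = g n).

Lemma ueq_refl f : ueq f f. Proof. by apply: US UT. Qed.
Lemma ueq_sym f g : ueq f g -> ueq g f. Proof. by apply: US. Qed.
Lemma ueq_trans f g h : ueq f g -> ueq g h -> ueq f h.
Proof. move=> a b; apply: US (UI a b) => n [-> ->] //. Qed.

Definition ucar := {P : (nat -> M) -> Prop | exists f, P = ueq f}.
Definition cls (f : nat -> M) : ucar := exist _ (ueq f) (ex_intro _ f erefl).

Lemma cls_eq f g : cls f = cls g <-> ueq f g.
Proof.
split.
  move=> h; have : proj1_sig (cls f) = proj1_sig (cls g) by rewrite h.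
  move=> /= e; rewrite e; exact: ueq_refl.
move=> h; apply: eq_sig_hprop.
  move=> x p q; apply: proof_irrelevance.
apply: functional_extensionality => k /=; apply: propositional_extensionality.
split=> ?; [apply: ueq_trans (ueq_sym h) _ | apply: ueq_trans h _] => //.
Qed.

Definition rep (c : ucar) : nat -> M :=
  proj1_sig (constructive_indefinite_description _ (proj2_sig c)).

Lemma rep_spec c : cls (rep c) = c.
Proof.
rewrite /rep; case: (constructive_indefinite_description _ _) => f /= e.
apply: eq_sig_hprop; first by move=> x p q; apply: proof_irrelevance.
by rewrite /= e.
Qed.

Lemma rep_cls f : ueq (rep (cls f)) f.
Proof. by apply/cls_eq; rewrite rep_spec. Qed.

Definition UP : structure L := @Structure L ucar (cls (fun _ => witness M))
  (fun g args => cls (fun n => @interp_f L M g (fun i => rep (args i) n)))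
  (fun r args => U (fun n => @interp_r L M r (fun i => rep (args i) n))).

Lemma eval_los (v : nat -> UP) (f : nat -> nat -> M) (Hv : forall j, v j = cls (f j)) :
  forall t, eval v t = cls (fun n => eval (fun j => f j n) t).
Proof.
fix IH 1; move=> [i | g ts] /=; first exact: Hv.
apply/cls_eq.
have E : forall i, ueq (rep (eval v (ts i))) (fun n => eval (fun j => f j n) (ts i)).
  by move=> i; rewrite IH; apply: rep_cls.
apply: US (U_fin E) => n h; congr interp_f; apply: functional_extensionality => i.
exact: h.
Qed.

Definition updf (f : nat -> nat -> M) i (g : nat -> M) : nat -> nat -> M :=
  fun j => if j == i then g else f j.

Lemma updfE f i g n : (fun j => updf f i g j n) = upd (fun j => f j n) i (g n).
Proof. apply: functional_extensionality => j; rewrite /updf /upd; by case: (j == i). Qed.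

Lemma upd_cls (v : nat -> UP) f i g : (forall j, v j = cls (f j)) ->
  forall j, upd v i (cls g) j = cls (updf f i g j).
Proof. move=> Hv j; rewrite /upd /updf; case: (j == i) => //. Qed.

Definition eps (P : M -> Prop) : M := epsilon (inhabits (witness M)) P.
Lemma eps_spec (P : M -> Prop) : (exists a, P a) -> P (eps P).
Proof. exact: epsilon_spec. Qed.

Lemma los (p : formula L) : forall (v : nat -> UP) (f : nat -> nat -> M),
  (forall j, v j = cls (f j)) ->
  (sat v p <-> U (fun n => sat (fun j => f j n) p)).
Proof.
elim: p => [t1 t2|r ts||p IH|p IHp q IHq|p IHp q IHq|p IHp q IHq|i p IH|i p IH] v f Hv /=.
- by rewrite !(eval_los Hv) cls_eq.
- have E : forall i, ueq (rep (eval v (ts i))) (fun n => eval (fun j => f j n) (ts i)).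
    by move=> i; rewrite (eval_los Hv); apply: rep_cls.
  apply: (U_iff (U_fin E)) => n h.
  have -> // : (fun i => rep (eval v (ts i)) n) = (fun i => eval (fun j => f j n) (ts i)).
  by apply: functional_extensionality => i; apply: h.
- by split=> // /U0.
- rewrite (IH v f Hv); split.
    by move=> h; case: (Uult (fun n => sat (fun j => f j n) p)).
  move=> h1 h2; apply: U0; apply: US (UI h1 h2) => n [] //.
- rewrite (IHp v f Hv) (IHq v f Hv); split.
    by move=> [a b]; apply: UI.
  by move=> h; split; apply: US h => n [].
- rewrite (IHp v f Hv) (IHq v f Hv); split.
    by move=> [a|b]; [apply: US a => n; left | apply: US b => n; right].
  move=> h; case: (Uult (fun n => sat (fun j => f j n) p)) => [a|na]; first by left.
  by right; apply: US (UI h na) => n [[]].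
- rewrite (IHp v f Hv) (IHq v f Hv); split.
    move=> h; case: (Uult (fun n => sat (fun j => f j n) p)) => [a|na].
      by apply: US (h a) => n b _.
    by apply: US na => n na a.
  move=> h a; apply: US (UI h a) => n [x y]; exact: x.
- split.
    move=> [a ha]; have Hv' := upd_cls i (rep a) Hv.
    rewrite rep_spec in Hv'; move/(IH _ _ Hv'): ha => ha.
    by apply: US ha => n; rewrite updfE => h; exists (rep a n).
  move=> h; pose g n := eps (fun a => sat (upd (fun j => f j n) i a) p).
  exists (cls g); apply/(IH _ _ (upd_cls i g Hv)).
  apply: US h => n h; rewrite updfE; exact: (eps_spec h).
- split.
    move=> h; case: (Uult (fun n => forall a, sat (upd (fun j => f j n) i a) p)) => // hn.
    pose g n := eps (fun a => ~ sat (upd (fun j => f j n) i a) p).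
    have := h (cls g); move/(IH _ _ (upd_cls i g Hv)) => h2.
    exfalso; apply: U0; apply: US (UI h2 hn) => n []; rewrite updfE => s ns.
    have : exists a, ~ sat (upd (fun j => f j n) i a) p.
      by apply: NNPP => ne; apply: ns => a; apply: NNPP => na; apply: ne; exists a.
    by move/eps_spec.
  move=> h a; have Hv' := upd_cls i (rep a) Hv.
  rewrite rep_spec in Hv'; apply/(IH _ _ Hv').
  by apply: US h => n h; rewrite updfE.
Qed.

Lemma UP_models : models_th M UP.
Proof.
move=> p hp v; have Hv : forall j, v j = cls (rep (v j)) by move=> j; rewrite rep_spec.
apply/(los p Hv); by apply: US UT.
Qed.

Lemma holds_los p q (phi : formula L) (xs : 'I_p -> nat -> M) (ys : 'I_q -> nat -> M) :
  holds (M:=UP) phi (fun i => cls (xs i)) (fun i => cls (ys i)) <->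
  U (fun n => holds phi (fun i => xs i n) (fun i => ys i n)).
Proof.
pose f := fun j n => envcat p (tenv (witness M) (fun i => xs i n)) (tenv (witness M) (fun i => ys i n)) j.
apply: (@los phi _ f); rewrite /f.
move=> j; rewrite /envcat; case: (j < p); rewrite /tenv; [case: (insub j) => [o|] // | case: (insub (j - p)) => [o|] //].
Qed.

Lemma rep_tuple p (x : 'I_p -> UP) : x = (fun i => cls (rep (x i))).
Proof. by apply: functional_extensionality => i; rewrite rep_spec. Qed.

End Ultra.


Fixpoint smax (f : nat -> nat) k := if k is k'.+1 then maxn (f k') (smax f k') else 0.
Lemma smax_ge f k i : i < k -> f i <= smax f k.
Proof.
elim: k => [|k IH] //= ik; case: (eqVneq i k) => [->|ne]; first exact: leq_maxl.
have := IH (_ : i < k); move: ne ik => /eqP; lia.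
Qed.

Theorem lemma4p3 :
  forall (L : signature) (M : structure L) (n : nat) (G : dgroup M n),
  zero_definable G ->
  forall (m : nat) (psi : formula L),
  fvars_in (fun j => j < n + m) psi ->
  (NTP2 M ->
   (forall (x : 'I_n -> M) (y : 'I_m -> M), holds psi x y -> gdom G x) ->
   exists k : nat,
   forall (H : ('I_n -> M) -> Prop) (J : Type) (T : J -> Grp)
     (pi : ('I_n -> M) -> forall j, T j)
     (Rbar : J -> ('I_n -> M) -> Prop) (R : forall j, T j -> Prop),
   lemma_setting G H pi Rbar R ->
   (forall (n0 : nat) (F : nat -> J), exists b : 'I_m -> M,
      forall x : 'I_n -> M,
        (forall i, i <= n0 -> Rbar (F i) x) <-> holds psi x b) ->
   card_le J k)
  /\
  (NIP M ->
   exists k : nat,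
   forall (H : ('I_n -> M) -> Prop) (J : Type) (T : J -> Grp)
     (pi : ('I_n -> M) -> forall j, T j)
     (Rbar : J -> ('I_n -> M) -> Prop) (R : forall j, T j -> Prop),
   lemma_setting G H pi Rbar R ->
   (forall j : J, exists b : 'I_m -> M,
      forall x : 'I_n -> M, Rbar j x <-> holds psi x b) ->
   card_le J k).
Proof.
move=> L M n G [delta [mu [fd [fm [dP mP]]]]] m psi fp.
have [U [UT [UI [US [U0 [Uult Ucof]]]]]] := nonprincipal_uf.
split.
- move=> ntp2 psiG; apply: NNPP => nk.
  pose ph := phi n m delta mu psi.
  have lev : forall l, exists a : nat -> nat -> 'I_(m + n) -> M,
   (forall i j j' (x : 'I_n -> M), i <= l -> j <= l -> j' <= l -> j != j' ->
       holds ph x (a i j) -> holds ph x (a i j') -> False) /\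
   (forall f : nat -> nat, (forall i, i <= l -> f i <= l) ->
       exists x : 'I_n -> M, forall i, i <= l -> holds ph x (a i (f i))).
    move=> l.
    have [H [J [T [pi [Rbar [R [s [hy nc]]]]]]]] : exists H J T pi Rbar R,
      @lemma_setting M n G H J T pi Rbar R /\
      (forall (n0 : nat) (F : nat -> J), exists b : 'I_m -> M,
        forall x : 'I_n -> M, (forall i, i <= n0 -> Rbar (F i) x) <-> holds psi x b) /\
      ~ card_le J (l.+1 * l.+1).
      apply: NNPP => h; apply: nk; exists (l.+1 * l.+1) => H J T pi Rbar R s hy.
      apply: NNPP => nc; apply: h; by exists H, J, T, pi, Rbar, R.
    exact: (conf_tp2 fd fm fp dP mP psiG s hy nc).
  pose A l := proj1_sig (cid (lev l)).
  have AP : forall l, _ := fun l => proj2_sig (cid (lev l)).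
  apply: (ntp2 ph n (m + n)); split; first exact: phi_fvars.
  exists 2, (UP U M); split; first exact: (UP_models UT UI US U0 Uult).
  exists (fun i j k => cls U (fun l => A l i j k)); split.
  + move=> i s us ss [x hx]; move: us ss hx; case: s => [|j [|j' [|? ?]]] //= us _ hx.
    have ne : j != j' by move: us; rewrite inE andbT.
    have jin : j' \in [:: j; j'] by rewrite !inE eqxx orbT.
    have h1 := hx j (mem_head _ _); have h2 := hx j' jin.
    rewrite (rep_tuple x) in h1 h2.
    move/(holds_los UT UI US U0 Uult): h1 => h1; move/(holds_los UT UI US U0 Uult): h2 => h2.
    apply: U0; apply: (US _ _ _ (UI _ _ (UI _ _ h1 h2) (Ucof (maxn i (maxn j j'))))) => l [[a b] c].
    apply: ((AP l).1 i j j' _ _ _ _ ne a b); lia.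
  + move=> f n0.
    pose B := n0 + smax f n0.
    pose f' i := if i < n0 then f i else 0.
    pose xl l := epsilon (inhabits (fun _ : 'I_n => witness M))
      (fun x => forall i, i <= l -> holds ph x (A l i (f' i))).
    exists (fun k => cls U (fun l => xl l k)) => i il.
    apply/(holds_los UT UI US U0 Uult); apply: (US _ _ _ (Ucof B)) => l lB.
    have ex : exists x : 'I_n -> M, forall i, i <= l -> holds ph x (A l i (f' i)).
      apply: ((AP l).2 f') => i' il'; rewrite /f'; case: ifP => h //.
      have := smax_ge f h; lia.
    have := epsilon_spec _ _ ex i (_ : i <= l).
    rewrite /f' il; apply; lia.
- move=> nip; apply: NNPP => nk.
  have lev : forall l, exists (h : nat -> 'I_n -> M) (c : (nat -> Prop) -> 'I_m -> M),
    forall i (S : nat -> Prop), i <= l -> (holds psi (h i) (c S) <-> S i).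
    move=> l.
    have [H [J [T [pi [Rbar [R [s [hy nc]]]]]]]] : exists H J T pi Rbar R,
      @lemma_setting M n G H J T pi Rbar R /\
      (forall j : J, exists b : 'I_m -> M, forall x : 'I_n -> M, Rbar j x <-> holds psi x b) /\
      ~ card_le J (2 ^ l.+1).
      apply: NNPP => h; apply: nk; exists (2 ^ l.+1) => H J T pi Rbar R s hy.
      apply: NNPP => nc; apply: h; by exists H, J, T, pi, Rbar, R.
    exact: (conf_nip s hy nc).
  pose Hh l := proj1_sig (cid (lev l)).
  pose Cc l := proj1_sig (cid (proj2_sig (cid (lev l)))).
  have CP : forall l i S, i <= l -> (holds psi (Hh l i) (Cc l S) <-> S i).
    by move=> l; rewrite /Cc /Hh; case: (cid (lev l)) => h /= hc; case: (cid hc).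
  apply: (nip psi n m); split; first exact: fp.
  exists (UP U M); split; first exact: (UP_models UT UI US U0 Uult).
  exists (fun i k => cls U (fun l => Hh l i k)), (fun S k => cls U (fun l => Cc l S k)).
  move=> i S; rewrite (holds_los UT UI US U0 Uult); split.
    move=> h; apply: NNPP => nS; apply: U0; apply: (US _ _ _ (UI _ _ h (Ucof i))) => l [hl il].
    by apply: nS; apply/(CP l i S il).
  move=> Si; apply: (US _ _ _ (Ucof i)) => l il; by apply/(CP l i S il).
Qed.
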